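(* Let $E=\{a,b,c,d,e\}$ (five distinct events) and let $\delta=(E,\emptyset,\mapsto)$ be the DES with $\mapsto=\{\{x,y\}\mapsto e\mid x,y\in\{a,b,c,d\},\ x\neq y\}$. Then there is no SES $\sigma=(E,\#',\to,\triangleright)$ with the same set of events $E$ such that $\mathrm{Traces}(\delta)=\mathrm{Traces}(\sigma)$. In particular, there exist DESs that cannot be translated into an SES over the same events with the same traces.
   Context: Dual event structure (DES): $\delta=(E,\#,\mapsto)$ with $\#\subseteq E^2$ irreflexive and symmetric, $\mapsto\subseteq 2^E\times E$. For $t=e_1\cdots e_n$, $\overline{t_k}=\{e_1,\ldots,e_k\}$. A DES trace is a finite sequence of pairwise distinct events, pairwise not in conflict, such that for every $i$ and every $X$ with $X\mapsto e_i$ we have $X\cap\overline{t_{i-1}}\neq\emptyset$. SES: $\sigma=(E,\#,\to,\triangleright)$ with $\#\subseteq E^2$ irreflexive and symmetric, $\to\subseteq E^2$ an arbitrary binary relation (initial causality), $\triangleright\subseteq E^3$ with $(c,d,t)\in\triangleright$ implying $c\to t$. $\mathrm{ic}(e)=\{e'\mid e'\to e\}$, $\mathrm{dc}(H,e)=\{e'\mid\exists d\in H.(e',d,e)\in\triangleright\}$. An SES trace is a finite sequence $e_1\cdots e_n$ of pairwise distinct events of $E$, pairwise not in conflict, with $\mathrm{ic}(e_i)\setminus\mathrm{dc}(\overline{t_{i-1}},e_i)\subseteq\overline{t_{i-1}}$ for all $i$. *)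

(* Defs.v *)
From Stdlib Require Import List.
Import ListNotations.

(* For t = e_1 ... e_n, the prefix set  \overline{t_k} = {e_1..e_k}  is  firstn k t;
   e_i (1-based) is  nth_error t (i-1),  so  \overline{t_{i-1}}  = firstn (i-1) t. *)

Record DES (E : Type) := mkDES {
  des_conf : E -> E -> Prop;
  des_caus : (E -> Prop) -> E -> Prop }.
Arguments des_conf {E}.
Arguments des_caus {E}.

Definition DES_wf {E : Type} (D : DES E) : Prop :=
  (forall x, ~ des_conf D x x) /\ (forall x y, des_conf D x y -> des_conf D y x).

Definition des_trace {E : Type} (D : DES E) (t : list E) : Prop :=
  NoDup t /\
  (forall x y, In x t -> In y t -> ~ des_conf D x y) /\
  (forall i ei, nth_error t i = Some ei ->
     forall X, des_caus D X ei -> exists x, X x /\ In x (firstn i t)).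

(** Shrinking causality event structures (E, #, ->, |>). *)
Record SES (E : Type) := mkSES {
  ses_conf : E -> E -> Prop;
  ses_ic : E -> E -> Prop;          (* ses_ic e' e  :  e' -> e *)
  ses_dc : E -> E -> E -> Prop }.   (* ses_dc c d t :  (c,d,t) in |> *)
Arguments ses_conf {E}.
Arguments ses_ic {E}.
Arguments ses_dc {E}.

Definition SES_wf {E : Type} (S : SES E) : Prop :=
  (forall x, ~ ses_conf S x x) /\
  (forall x y, ses_conf S x y -> ses_conf S y x) /\
  (forall c d t, ses_dc S c d t -> ses_ic S c t).

Definition ses_trace {E : Type} (S : SES E) (t : list E) : Prop :=
  NoDup t /\
  (forall x y, In x t -> In y t -> ~ ses_conf S x y) /\
  (forall i ei, nth_error t i = Some ei ->
     forall e', ses_ic S e' ei ->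
       ~ (exists d, In d (firstn i t) /\ ses_dc S e' d ei) ->
       In e' (firstn i t)).

Inductive ev5 : Type := Ea | Eb | Ec | Ed | Ee.

Definition abcd (x : ev5) : Prop := x = Ea \/ x = Eb \/ x = Ec \/ x = Ed.

Definition delta6 : DES ev5 :=
  mkDES ev5 (fun _ _ => False)
    (fun X z => z = Ee /\
       exists x y, abcd x /\ abcd y /\ x <> y /\ (forall w, X w <-> w = x \/ w = y)).

(* Main.v *)
Require Import Defs.
From Stdlib Require Import List Classical.
Import ListNotations.

Lemma abcd_ne (x:ev5): abcd x -> x <> Ee.
Proof. unfold abcd; intros [ ->|[ ->|[ ->| ->]]]; discriminate. Qed.

Lemma des_tr3 (h1 h2 r s : ev5) :
  abcd h1 -> abcd h2 -> abcd r ->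
  h1 <> h2 -> h1 <> r -> h2 <> r ->
  (forall z, abcd z -> z = h1 \/ z = h2 \/ z = r \/ z = s) ->
  des_trace delta6 [h1;h2;r;Ee].
Proof.
  intros A1 A2 A3 D12 D13 D23 Cov.
  pose proof (abcd_ne _ A1); pose proof (abcd_ne _ A2); pose proof (abcd_ne _ A3).
  split; [|split].
  - repeat constructor; simpl; intuition congruence.
  - intros; simpl; auto.
  - intros i ei Hn X [HE [x [y [Ax [Ay [Dxy HX]]]]]]. subst ei.
    destruct i as [|[|[|[|i]]]]; simpl in Hn; try congruence.
    + simpl.
      destruct (classic (x = s)) as [ ->|Hxs].
      * exists y. split; [apply HX; auto|].
        destruct (Cov y Ay) as [ ->|[ ->|[ ->| ->]]]; simpl; tauto.
      * exists x. split; [apply HX; auto|].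
        destruct (Cov x Ax) as [ ->|[ ->|[ ->| ->]]]; simpl; tauto.
    + destruct i; discriminate.
Qed.

Lemma full_tr : des_trace delta6 [Ea;Eb;Ec;Ed;Ee].
Proof.
  split; [|split].
  - repeat constructor; simpl; intuition discriminate.
  - intros; simpl; auto.
  - intros i ei Hn X [HE [x [y [Ax [Ay [Dxy HX]]]]]]. subst ei.
    destruct i as [|[|[|[|[|i]]]]]; simpl in Hn; try congruence.
    + exists x; split; [apply HX; auto|]. simpl.
      destruct Ax as [ ->|[ ->|[ ->| ->]]]; tauto.
    + destruct i; discriminate.
Qed.

Lemma key (S : SES ev5) (HS : SES_wf S)
  (Heq : forall t, des_trace delta6 t <-> ses_trace S t) (h1 h2 p q : ev5) :
  abcd h1 -> abcd h2 -> abcd p -> abcd q ->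
  h1 <> h2 -> h1 <> p -> h1 <> q -> h2 <> p -> h2 <> q -> p <> q ->
  (forall z, abcd z -> z = h1 \/ z = h2 \/ z = p \/ z = q) ->
  exists y, (y = p \/ ses_dc S y p Ee) /\ (y = q \/ ses_dc S y q Ee) /\
    y <> h1 /\ y <> h2 /\ ~ ses_dc S y h1 Ee /\ ~ ses_dc S y h2 Ee.
Proof.
  intros A1 A2 A3 A4 D12 D1p D1q D2p D2q Dpq Cov.
  pose proof (abcd_ne _ A1); pose proof (abcd_ne _ A2).
  assert (NC : forall x y, ~ ses_conf S x y).
  { intros x y. destruct (proj1 (Heq _) full_tr) as [_ [C _]].
    apply C; destruct x, y; simpl; tauto. }
  assert (T2 : ses_trace S [h1;h2]).
  { apply Heq. split; [|split].
    - repeat constructor; simpl; intuition congruence.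
    - intros; simpl; auto.
    - intros i ei Hn X [HE _]; subst ei.
      destruct i as [|[|i]]; simpl in Hn; try congruence. destruct i; discriminate. }
  assert (T3 : ~ ses_trace S [h1;h2;Ee]).
  { intros T. apply Heq in T. destruct T as [_ [_ C]].
    destruct (C 2 Ee eq_refl (fun w => w = p \/ w = q)) as [x [Hx Hin]].
    { split; [reflexivity|]. exists p, q. repeat split; auto; tauto. }
    simpl in Hin. intuition congruence. }
  assert (Hfail : exists i ei e', nth_error [h1;h2;Ee] i = Some ei /\ ses_ic S e' ei /\
      ~ (exists d, In d (firstn i [h1;h2;Ee]) /\ ses_dc S e' d ei) /\
      ~ In e' (firstn i [h1;h2;Ee])).
  { apply NNPP. intro N. apply T3. split; [|split].
    - repeat constructor; simpl; intuition congruence.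
    - intros; apply NC.
    - intros i ei Hn e' Hic Hnd. apply NNPP. intro Hni. apply N.
      exists i, ei, e'. auto. }
  destruct Hfail as [i [ei [y [Hn [Hic [Hnd Hni]]]]]].
  destruct T2 as [_ [_ C2]].
  destruct i as [|[|[|i]]]; simpl in Hn.
  - injection Hn as <-. exfalso. apply Hni. apply (C2 0 h1 eq_refl y Hic Hnd).
  - injection Hn as <-. exfalso. apply Hni. apply (C2 1 h2 eq_refl y Hic Hnd).
  - injection Hn as <-. simpl in Hnd, Hni.
    assert (G : forall r s, abcd r -> h1 <> r -> h2 <> r ->
               (forall z, abcd z -> z = h1 \/ z = h2 \/ z = r \/ z = s) ->
               y = r \/ ses_dc S y r Ee).
    { intros r s Ar D1r D2r Cr.
      destruct (proj1 (Heq _) (des_tr3 h1 h2 r s A1 A2 Ar D12 D1r D2r Cr)) as [_ [_ C4]].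
      specialize (C4 3 Ee eq_refl y Hic). simpl in C4.
      destruct (classic (exists d, (h1 = d \/ h2 = d \/ r = d \/ False) /\ ses_dc S y d Ee))
        as [[d [Hd Hdc]]|Hno].
      - destruct Hd as [<-|[<-|[<-|[]]]]; [exfalso; apply Hnd; eauto | exfalso; apply Hnd; eauto | auto].
      - destruct (C4 Hno) as [<-|[<-|[<-|[]]]]; [exfalso; tauto|exfalso; tauto|auto]. }
    exists y. split; [|split].
    + apply (G p q); auto.
    + apply (G q p); auto. intros z Hz; destruct (Cov z Hz) as [?|[?|[?|?]]]; tauto.
    + repeat split; intro; subst; [tauto|tauto| |]; apply Hnd; eauto.
  - destruct i; discriminate.
Qed.

Lemma clash (S : SES ev5) y p : (y = p \/ ses_dc S y p Ee) -> y <> p -> ~ ses_dc S y p Ee -> False.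
Proof. tauto. Qed.

Ltac cov := let z := fresh in let Hz := fresh in intros z Hz; clear - Hz;
  destruct Hz as [ -> |[ -> |[ -> | -> ]]]; intuition.
Ltac ab := clear; unfold abcd; intuition discriminate.

Theorem lemma6 :
  DES_wf delta6 /\
  ~ exists S : SES ev5, SES_wf S /\ (forall t, des_trace delta6 t <-> ses_trace S t).
Proof.
  split.
  - split; intros; simpl in *; auto.
  - intros [S [HS Heq]].
    destruct (key S HS Heq Ec Ed Ea Eb) as [y1 H1]; [ab|ab|ab|ab|discriminate|discriminate|discriminate|discriminate|discriminate|discriminate|cov|].
    destruct (key S HS Heq Eb Ed Ea Ec) as [y2 H2]; [ab|ab|ab|ab|discriminate|discriminate|discriminate|discriminate|discriminate|discriminate|cov|].
    destruct (key S HS Heq Eb Ec Ea Ed) as [y3 H3]; [ab|ab|ab|ab|discriminate|discriminate|discriminate|discriminate|discriminate|discriminate|cov|].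
    destruct (key S HS Heq Ea Ed Eb Ec) as [y4 H4]; [ab|ab|ab|ab|discriminate|discriminate|discriminate|discriminate|discriminate|discriminate|cov|].
    destruct (key S HS Heq Ea Ec Eb Ed) as [y5 H5]; [ab|ab|ab|ab|discriminate|discriminate|discriminate|discriminate|discriminate|discriminate|cov|].
    destruct (key S HS Heq Ea Eb Ec Ed) as [y6 H6]; [ab|ab|ab|ab|discriminate|discriminate|discriminate|discriminate|discriminate|discriminate|cov|].
    assert (ND : NoDup [y1;y2;y3;y4;y5;y6]).
    { destruct H1 as (P1&Q1&R1&S1&T1&U1), H2 as (P2&Q2&R2&S2&T2&U2),
        H3 as (P3&Q3&R3&S3&T3&U3), H4 as (P4&Q4&R4&S4&T4&U4),
        H5 as (P5&Q5&R5&S5&T5&U5), H6 as (P6&Q6&R6&S6&T6&U6).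
      repeat apply NoDup_cons; try apply NoDup_nil; simpl; intros Hin;
      repeat (destruct Hin as [Hin|Hin]; [subst; match goal with H : _ \/ _, H2 : _ <> _, H3 : ~ _ |- _ => exact (clash _ _ _ H H2 H3) end|]); exact Hin. }
    assert (Inc : incl [y1;y2;y3;y4;y5;y6] [Ea;Eb;Ec;Ed;Ee]).
    { intros z _; destruct z; simpl; auto 7. }
    pose proof (NoDup_incl_length ND Inc) as L. simpl in L. repeat apply le_S_n in L. inversion L.
Qed.
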